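(* Let $\Gamma$ and $\mathcal{C}$ be regular conics in the real plane which have a common point of intersection of order higher than $2$ (intersection multiplicity $3$ or $4$). Then there are no closed polygonal lines inscribed in $\Gamma$ and circumscribed about $\mathcal{C}$.
   Context: A regular conic is a smooth curve given by a quadratic equation. A polygonal line $A_1A_2\dots$ is inscribed in $\Gamma$ and circumscribed about $\mathcal{C}$ if all vertices lie on $\Gamma$ and each side line $A_iA_{i+1}$ is tangent to $\mathcal{C}$, consecutive sides through $A_i$ being the two distinct tangent lines from $A_i$ to $\mathcal{C}$; it is closed if its vertex sequence is periodic. *)

(* Defs.v *)
From mathcomp Require Import all_boot all_order all_algebra.
From mathcomp Require Import reals.
Set Implicit Arguments.
Unset Strict Implicit.
Unset Printing Implicit Defensive.
Import Order.TTheory GRing.Theory Num.Theory.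
Local Open Scope ring_scope.

Section Conics.
Variable R : realType.

Definition point := (R * R)%type.

(* A quadratic equation  a x^2 + b x y + c y^2 + d x + e y + f = 0. *)
Record quadric := Quadric { qa : R; qb : R; qc : R; qd : R; qe : R; qf : R }.

Definition qeval (Q : quadric) (P : point) : R :=
  qa Q * P.1 ^+ 2 + qb Q * P.1 * P.2 + qc Q * P.2 ^+ 2
  + qd Q * P.1 + qe Q * P.2 + qf Q.

Definition on_conic (Q : quadric) (P : point) : Prop := qeval Q P = 0.

Definition qgrad (Q : quadric) (P : point) : point :=
  (2 * qa Q * P.1 + qb Q * P.2 + qd Q, qb Q * P.1 + 2 * qc Q * P.2 + qe Q).

(* determinant of the symmetric 3x3 matrix of the conic
   [[a, b/2, d/2], [b/2, c, e/2], [d/2, e/2, f]] *)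
Definition qdisc (Q : quadric) : R :=
  let a := qa Q in let b := qb Q / 2 in let c := qc Q in
  let d := qd Q / 2 in let e := qe Q / 2 in let f := qf Q in
  a * (c * f - e * e) - b * (b * f - e * d) + d * (b * e - c * d).

(* A regular conic: a nondegenerate quadratic equation whose real zero set is
   nonempty; this is exactly a smooth (real) curve given by a quadratic
   equation (ellipse, parabola or hyperbola). *)
Definition regular_conic (Q : quadric) : Prop :=
  qdisc Q != 0 /\ exists P : point, on_conic Q P.

Definition dot (u v : point) : R := u.1 * v.1 + u.2 * v.2.

Definition collinear (P X Y : point) : Prop :=
  (X.1 - P.1) * (Y.2 - P.2) - (X.2 - P.2) * (Y.1 - P.1) = 0.

Definition tangent_line (C : quadric) (X Y : point) : Prop :=
  X <> Y /\
  exists P : point, on_conic C P /\ collinear P X Y /\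
                    dot (qgrad C P) (Y.1 - X.1, Y.2 - X.2) = 0.

(* Intersection multiplicity of two conics at a common point P.
   Gamma is smooth at P; it is parametrised near P by the rational map
     gamma(t) = P - (N.d(t)) / q_Gamma(d(t)) * d(t),   d(t) = T + t N,
   where N = grad Gamma (P), T = (-N_2, N_1) is the tangent direction and
   q_Gamma is the quadratic part of Gamma (lines through P with direction
   d(t) meet Gamma a second time at gamma(t); gamma(0) = P, gamma'(0) <> 0).
   The intersection multiplicity of Gamma and C at P is the order of
   vanishing at t = 0 of  C(gamma(t)), i.e. of the polynomial
     q_Gamma(d)^2 * C(gamma(t))
       = C(P) q_Gamma(d)^2 - (grad C(P).d)(N.d) q_Gamma(d) + q_C(d) (N.d)^2,
   since q_Gamma(d(0)) = q_Gamma(T) <> 0. *)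

Definition qquad_poly (Q : quadric) (u v : {poly R}) : {poly R} :=
  qa Q *: (u * u) + qb Q *: (u * v) + qc Q *: (v * v).

Definition contact_poly (G C : quadric) (P : point) : {poly R} :=
  let N := qgrad G P in
  let du := (- N.2)%:P + N.1 *: 'X in
  let dv := N.1%:P + N.2 *: 'X in
  let Nd := N.1 *: du + N.2 *: dv in
  let gCd := (qgrad C P).1 *: du + (qgrad C P).2 *: dv in
  let qG := qquad_poly G du dv in
  qeval C P *: (qG * qG) - gCd * Nd * qG + qquad_poly C du dv * (Nd * Nd).

(* intersection multiplicity (meaningful when it is finite, i.e. when the
   contact polynomial is nonzero) *)
Definition int_mult (G C : quadric) (P : point) : nat :=
  mup 0 (contact_poly G C P).

(* A polygonal line A_0 A_1 A_2 ... inscribed in Gamma and circumscribed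
   about C: all vertices lie on Gamma, each side line A_i A_{i+1} is tangent
   to C, and the two sides through A_i (i >= 1) are distinct lines (hence
   they are the two distinct tangent lines from A_i to C). *)
Definition inscribed_circumscribed (G C : quadric) (A : nat -> point) : Prop :=
  (forall i, on_conic G (A i)) /\
  (forall i, tangent_line C (A i) (A i.+1)) /\
  (forall i, ~ collinear (A i.+2) (A i) (A i.+1)).

Definition closed_polygon (A : nat -> point) : Prop :=
  exists n : nat, (0 < n)%N /\ forall i, A (i + n)%N = A i.

End Conics.

(* Main.v *)
Require Import Defs.
From mathcomp Require Import all_boot all_order all_algebra.
From mathcomp Require Import reals ring lra.
Set Implicit Arguments. Unset Strict Implicit. Unset Printing Implicit Defensive.
Import Order.TTheory GRing.Theory Num.Theory.
Local Open Scope ring_scope.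
Section S.
Variable R : realType.
Implicit Types (Q G C : quadric R) (Z A B N P : point R).

Definition tT N : point R := (- N.2, N.1).
Definition nn N : R := dot N N.

Definition tq Q N P : quadric R :=
  let T := tT N in let n := nn N in
  Quadric (qa Q * T.1 ^+ 2 + qb Q * T.1 * T.2 + qc Q * T.2 ^+ 2)
          (2 * qa Q * T.1 * N.1 + qb Q * (T.1 * N.2 + T.2 * N.1) + 2 * qc Q * T.2 * N.2)
          (qa Q * N.1 ^+ 2 + qb Q * N.1 * N.2 + qc Q * N.2 ^+ 2)
          (n * dot (qgrad Q P) T) (n * dot (qgrad Q P) N) (n ^+ 2 * qeval Q P).

Definition tp N P Z : point R := (dot (tT N) (Z.1 - P.1, Z.2 - P.2), dot N (Z.1 - P.1, Z.2 - P.2)).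

Lemma tq_eval Q N P Z : qeval (tq Q N P) (tp N P Z) = nn N ^+ 2 * qeval Q Z.
Proof. rewrite /tq /tp /nn /dot /qgrad /tT /qeval /=; ring. Qed.

Lemma tq_grad Q N P Z A B :
  dot (qgrad (tq Q N P) (tp N P Z)) ((tp N P B).1 - (tp N P A).1, (tp N P B).2 - (tp N P A).2)
  = nn N ^+ 2 * dot (qgrad Q Z) (B.1 - A.1, B.2 - A.2).
Proof. rewrite /tq /tp /nn /dot /qgrad /tT /qeval /=; ring. Qed.

Definition colv Z A B : R := (A.1 - Z.1) * (B.2 - Z.2) - (A.2 - Z.2) * (B.1 - Z.1).
Lemma tq_coll N P Z A B :
  colv (tp N P Z) (tp N P A) (tp N P B) = - nn N * colv Z A B.
Proof. rewrite /colv /tp /nn /dot /tT /=; ring. Qed.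

Lemma tq_disc Q N P : qdisc (tq Q N P) = nn N ^+ 4 * qdisc Q.
Proof. rewrite /qdisc /tq /tp /nn /dot /qgrad /tT /qeval /=; by field. Qed.


Definition dualv Q (l1 l2 l3 : R) : R :=
  (qc Q * qf Q - qe Q ^+ 2 / 4) * l1 ^+ 2 + (qa Q * qf Q - qd Q ^+ 2 / 4) * l2 ^+ 2
  + (qa Q * qc Q - qb Q ^+ 2 / 4) * l3 ^+ 2
  + 2 * (qd Q * qe Q / 4 - qb Q * qf Q / 2) * l1 * l2
  + 2 * (qb Q * qe Q / 4 - qc Q * qd Q / 2) * l1 * l3
  + 2 * (qb Q * qd Q / 4 - qa Q * qe Q / 2) * l2 * l3.

Lemma dual_scale Q k x y z : dualv Q (k*x) (k*y) (k*z) = k^+2 * dualv Q x y z.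
Proof. rewrite /dualv; ring. Qed.

Definition mv1 Q Z := qa Q * Z.1 + qb Q / 2 * Z.2 + qd Q / 2.
Definition mv2 Q Z := qb Q / 2 * Z.1 + qc Q * Z.2 + qe Q / 2.
Definition mv3 Q Z := qd Q / 2 * Z.1 + qe Q / 2 * Z.2 + qf Q.

Lemma dual_m Q Z : dualv Q (mv1 Q Z) (mv2 Q Z) (mv3 Q Z) = qdisc Q * qeval Q Z.
Proof. rewrite /dualv /mv1 /mv2 /mv3 /qdisc /qeval /=; by field. Qed.

Lemma adj3 Q Z : (qb Q * qe Q / 4 - qc Q * qd Q / 2) * mv1 Q Z
  + (qb Q * qd Q / 4 - qa Q * qe Q / 2) * mv2 Q Z
  + (qa Q * qc Q - qb Q ^+ 2 / 4) * mv3 Q Z = qdisc Q.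
Proof. rewrite /mv1 /mv2 /mv3 /qdisc /=; by field. Qed.

Lemma dual_tangent Q A B Z : qdisc Q != 0 -> qeval Q Z = 0 -> colv Z A B = 0 ->
  dot (qgrad Q Z) (B.1 - A.1, B.2 - A.2) = 0 ->
  dualv Q (A.2 - B.2) (B.1 - A.1) (A.1 * B.2 - A.2 * B.1) = 0.
Proof.
move=> hd hZ hc hg.
set l1 := A.2 - B.2; set l2 := B.1 - A.1; set l3 := A.1 * B.2 - A.2 * B.1.
have e12 : l1 * mv2 Q Z = mv1 Q Z * l2.
  have h : mv1 Q Z * l2 - l1 * mv2 Q Z = dot (qgrad Q Z) (B.1 - A.1, B.2 - A.2) / 2.
    by rewrite /l1 /l2 /mv1 /mv2 /dot /qgrad /=; field.
  by apply/eqP; rewrite eq_sym -subr_eq0 h hg mul0r.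
have hl3 : l3 = -(Z.1 * l1 + Z.2 * l2).
  apply/eqP; rewrite -subr_eq0; apply/eqP; rewrite -hc /colv /l1 /l2 /l3; ring.
have hm3 : mv3 Q Z = -(Z.1 * mv1 Q Z + Z.2 * mv2 Q Z).
  apply/eqP; rewrite -subr_eq0; apply/eqP; rewrite -hZ /qeval /mv1 /mv2 /mv3; by field.
have e13 : l1 * mv3 Q Z = mv1 Q Z * l3.
  apply/eqP; rewrite -subr_eq0 hm3 hl3.
  have -> : l1 * - (Z.1 * mv1 Q Z + Z.2 * mv2 Q Z) - mv1 Q Z * - (Z.1 * l1 + Z.2 * l2)
    = Z.2 * (mv1 Q Z * l2 - l1 * mv2 Q Z) by ring.
  by rewrite e12 subrr mulr0.
have e23 : l2 * mv3 Q Z = mv2 Q Z * l3.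
  apply/eqP; rewrite -subr_eq0 hm3 hl3.
  have -> : l2 * - (Z.1 * mv1 Q Z + Z.2 * mv2 Q Z) - mv2 Q Z * - (Z.1 * l1 + Z.2 * l2)
    = Z.1 * (l1 * mv2 Q Z - mv1 Q Z * l2) by ring.
  by rewrite e12 subrr mulr0.
have e21 : l2 * mv1 Q Z = mv2 Q Z * l1 by rewrite mulrC -e12 mulrC.
have dm : dualv Q (mv1 Q Z) (mv2 Q Z) (mv3 Q Z) = 0 by rewrite dual_m hZ mulr0.
have k1 : mv1 Q Z ^+ 2 * dualv Q l1 l2 l3 = 0.
  by rewrite -dual_scale (mulrC (mv1 Q Z) l1) -e12 -e13 dual_scale dm mulr0.
have k2 : mv2 Q Z ^+ 2 * dualv Q l1 l2 l3 = 0.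
  by rewrite -dual_scale (mulrC (mv2 Q Z) l2) -e21 -e23 dual_scale dm mulr0.
case: (eqVneq (mv1 Q Z) 0) => [z1|nz1]; last first.
  by move/eqP: k1; rewrite mulf_eq0 expf_eq0 /= (negbTE nz1) /= => /eqP.
case: (eqVneq (mv2 Q Z) 0) => [z2|nz2]; last first.
  by move/eqP: k2; rewrite mulf_eq0 expf_eq0 /= (negbTE nz2) /= => /eqP.
have z3 : mv3 Q Z = 0 by rewrite hm3 z1 z2 !mulr0 addr0 oppr0.
by move: hd; rewrite -(adj3 Q Z) z1 z2 z3 !mulr0 !addr0 eqxx.
Qed.

Definition qpol Q : {poly R} := (qa Q)%:P + qb Q *: 'X + qc Q *: ('X * 'X).

Definition rpol G C P N : {poly R} :=
  - ((nn N * dot (qgrad C P) (tT N))%:P + (nn N * dot (qgrad C P) N) *: 'X) * qpol (tq G N P)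
  + (nn N ^+ 2) *: ('X * qpol (tq C N P)).

Lemma contact_eq G C P : qeval C P = 0 -> contact_poly G C P = 'X * rpol G C P (qgrad G P).
Proof.
move=> hC; rewrite /contact_poly hC scale0r add0r /rpol.
move: (qgrad G P) => N.
rewrite /qquad_poly /qpol /tq /nn /dot /tT /= -!mul_polyC.
ring.
Qed.


Lemma poly_aux (k0 k1 a b c a' b' c' n : R) (q : {poly R}) :
  - (k0%:P + k1 *: 'X) * (a%:P + b *: 'X + c *: ('X * 'X))
  + n *: ('X * (a'%:P + b' *: 'X + c' *: ('X * 'X))) = q * 'X ^+ 2 ->
  k0 * a = 0 /\ (k0 = 0 -> k1 * a = n * a').
Proof.
move=> h; split.
  have := congr1 (fun p => p.[0]) h; rewrite !(hornerD, hornerM, hornerN, hornerC, hornerX, hornerZ, hornerXn) => h0.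
  nra.
move=> k0z; move: h; rewrite k0z.
have hX : ('X : {poly R}) != 0 by rewrite polyX_eq0.
set r := (- (k1%:P) * (a%:P + b *: 'X + c *: ('X * 'X)) + n *: (a'%:P + b' *: 'X + c' *: ('X * 'X))).
have -> : - (0%:P + k1 *: 'X) * (a%:P + b *: 'X + c *: ('X * 'X))
  + n *: ('X * (a'%:P + b' *: 'X + c' *: ('X * 'X))) = 'X * r.
  by rewrite /r -!mul_polyC; ring.
have -> : q * 'X ^+ 2 = 'X * (q * 'X) by ring.
move/(mulfI hX) => h.
have := congr1 (fun p => p.[0]) h; rewrite /r !(hornerD, hornerM, hornerN, hornerC, hornerX, hornerZ, hornerXn) => h0.
nra.
Qed.

Lemma contact_cond G C P : qeval C P = 0 ->
  qa (tq G (qgrad G P) P) != 0 ->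
  contact_poly G C P != 0 -> (2 < int_mult G C P)%N ->
  (qd (tq C (qgrad G P) P) = 0) /\ (qa (tq C (qgrad G P) P) * qe (tq G (qgrad G P) P) =
  qa (tq G (qgrad G P) P) * qe (tq C (qgrad G P) P)).
Proof.
move=> hC haT hne; rewrite /int_mult mup_geq // polyC0 subr0.
case/dvdpP => q; rewrite contact_eq // => hq.
have hX : ('X : {poly R}) != 0 by rewrite polyX_eq0.
have hr : rpol G C P (qgrad G P) = q * 'X ^+ 2.
  by apply: (mulfI hX); rewrite hq; ring.
move: hr; rewrite /rpol /qpol => /poly_aux [h1 h2].
have hd : qd (tq C (qgrad G P) P) = 0.
  by move/eqP: h1; rewrite mulf_eq0 (negbTE haT) orbF => /eqP.
split => //.
have eqG : qe (tq G (qgrad G P) P) = nn (qgrad G P) ^+ 2 by rewrite /tq /= /nn expr2.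
have eqC : qe (tq C (qgrad G P) P) = nn (qgrad G P) * dot (qgrad C P) (qgrad G P) by [].
rewrite eqG eqC [qa (tq G _ _) * _]mulrC (h2 hd); ring.
Qed.

Definition ldual Q A B := dualv Q (A.2 - B.2) (B.1 - A.1) (A.1 * B.2 - A.2 * B.1).

Lemma ldual_sym Q A B : ldual Q B A = ldual Q A B.
Proof. rewrite /ldual /dualv; ring. Qed.

Lemma ldual_at0 Q B : qd Q = 0 -> qf Q = 0 -> ldual Q (0, 0) B = - (qe Q ^+ 2 / 4) * B.2 ^+ 2.
Proof. move=> hd hf; rewrite /ldual /dualv hd hf /=; ring. Qed.

Lemma disc_norm Q : qd Q = 0 -> qf Q = 0 -> qdisc Q = - (qa Q * qe Q ^+ 2 / 4).
Proof. move=> hd hf; rewrite /qdisc hd hf /=; by field. Qed.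

Lemma onG_v0 G Z : qd G = 0 -> qf G = 0 -> qa G != 0 -> qeval G Z = 0 -> Z.2 = 0 -> Z = (0, 0).
Proof.
move: Z => [z1 z2] hd hf ha /= hZ h2; subst z2.
have : qa G * z1 ^+ 2 = 0 by rewrite -hZ /qeval hd hf /=; ring.
by move/eqP; rewrite mulf_eq0 (negbTE ha) expf_eq0 /= => /eqP ->.
Qed.

Definition Fv G C (x y : R) := dualv C (qa G * (x + y) + qb G) (qc G - qa G * x * y) (qe G).
Definition qx G (x : R) := qa G * x ^+ 2 + qb G * x + qc G.

Lemma onG_param G Z : qd G = 0 -> qf G = 0 -> qeval G Z = 0 -> Z.2 != 0 ->
  qe G + Z.2 * qx G (Z.1 / Z.2) = 0.
Proof.
move: Z => [u v] hd hf /= hZ hv.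
have : v * (qe G + v * qx G (u / v)) = 0.
  rewrite -hZ /qeval /qx hd hf /=; by field.
by move/eqP; rewrite mulf_eq0 (negbTE hv) /= => /eqP.
Qed.

Lemma X_inj G A B : qd G = 0 -> qf G = 0 -> qe G != 0 ->
  qeval G A = 0 -> qeval G B = 0 -> A.2 != 0 -> B.2 != 0 ->
  A.1 / A.2 = B.1 / B.2 -> A = B.
Proof.
move=> hd hf he hA hB vA vB hx.
have pA := onG_param hd hf hA vA; have pB := onG_param hd hf hB vB.
rewrite hx in pA.
have hq : qx G (B.1 / B.2) != 0.
  apply/eqP => hq; move: pB; rewrite hq mulr0 addr0 => /eqP; by rewrite (negbTE he).
have hv : A.2 = B.2.
  apply/eqP; rewrite -subr_eq0; apply/eqP.
  have : (A.2 - B.2) * qx G (B.1 / B.2) = 0.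
    by rewrite mulrBl -[_ * _](addKr (qe G)) pA addr0 -[X in _ - X](addKr (qe G)) pB; ring.
  by move/eqP; rewrite mulf_eq0 (negbTE hq) orbF => /eqP.
move: A B hA hB vA vB hx pA pB hq hv => [u1 v1] [u2 v2] /= _ _ vA vB hx _ _ _ hv.
subst v2; congr pair.
by have := congr1 (fun t => t * v1) hx; rewrite !divfK.
Qed.

Lemma core_F G C A B : qd G = 0 -> qf G = 0 -> qe G != 0 ->
  qeval G A = 0 -> qeval G B = 0 -> A.2 != 0 -> B.2 != 0 -> A <> B ->
  ldual C A B = 0 -> Fv G C (A.1 / A.2) (B.1 / B.2) = 0.
Proof.
move=> hd hf he hA hB vA vB hAB hL.
have hxy : A.1 / A.2 - B.1 / B.2 != 0.
  by rewrite subr_eq0; apply/eqP => h; apply: hAB; apply: (X_inj hd hf he).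
have pA := onG_param hd hf hA vA; have pB := onG_param hd hf hB vB.
move: A B hA hB vA vB hAB hL hxy pA pB => [u1 v1] [u2 v2] /= _ _ vA vB _ hL hxy pA pB.
set x := u1 / v1 in pA hxy *; set y := u2 / v2 in pB hxy *.
have hu1 : u1 = x * v1 by rewrite /x divfK.
have hu2 : u2 = y * v2 by rewrite /y divfK.
set k := v1 * v2 * (x - y).
have c1 : qe G * (v1 - v2) = k * (qa G * (x + y) + qb G).
  apply/eqP; rewrite -subr_eq0; apply/eqP.
  have -> : qe G * (v1 - v2) - k * (qa G * (x + y) + qb G)
    = v1 * (qe G + v2 * qx G y) - v2 * (qe G + v1 * qx G x) by rewrite /k /qx; ring.
  by rewrite pA pB !mulr0 subrr.
have c2 : qe G * (u2 - u1) = k * (qc G - qa G * x * y).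
  apply/eqP; rewrite -subr_eq0; apply/eqP.
  have -> : qe G * (u2 - u1) - k * (qc G - qa G * x * y)
    = y * v2 * (qe G + v1 * qx G x) - x * v1 * (qe G + v2 * qx G y) by rewrite /k /qx hu1 hu2; ring.
  by rewrite pA pB !mulr0 subrr.
have c3 : qe G * (u1 * v2 - v1 * u2) = k * qe G by rewrite /k hu1 hu2; ring.
have : qe G ^+ 2 * ldual C (u1, v1) (u2, v2) = k ^+ 2 * Fv G C x y.
  by rewrite /ldual /= -dual_scale c1 c2 c3 /Fv dual_scale.
rewrite hL mulr0 => /esym/eqP; rewrite mulf_eq0 expf_eq0 /= /k !mulf_eq0 (negbTE vA) (negbTE vB) (negbTE hxy) /=.
by move/eqP.
Qed.

Definition kap G C := 2 * (qb C * qe G - qe C * qb G) / (qa G * qe C).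

Lemma core_step G C x y z : qd C = 0 -> qf C = 0 -> qa G != 0 -> qe C != 0 ->
  qa C * qe G = qa G * qe C ->
  Fv G C x y = 0 -> Fv G C z y = 0 -> x != z -> x + z - 2 * y = kap G C.
Proof.
move=> hd hf ha he hac h1 h2 hxz.
have hid : Fv G C x y - Fv G C z y =
  (x - z) * ((- (qe C ^+ 2 * qa G ^+ 2 / 4)) * (x + z - 2 * y)
             + qa G * qe C * (qb C * qe G - qe C * qb G) / 2)
  + (qa C * qe G - qa G * qe C) * qe C * qa G * y * (x - z).
  by rewrite /Fv /dualv hd hf; field.
set st := (- (qe C ^+ 2 * qa G ^+ 2 / 4)) * (x + z - 2 * y)
             + qa G * qe C * (qb C * qe G - qe C * qb G) / 2.
have e : (x - z) * st = 0.
  have e0 : (x - z) * st = Fv G C x y - Fv G C z y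
      - (qa C * qe G - qa G * qe C) * qe C * qa G * y * (x - z) by rewrite hid /st; ring.
  by rewrite e0 h1 h2 hac; ring.
have st0 : st = 0.
  by move/eqP: e; rewrite mulf_eq0 subr_eq0 (negbTE hxz) /= => /eqP.
have hn : qe C ^+ 2 * qa G ^+ 2 / 4 != 0.
  by rewrite mulf_neq0 ?mulf_neq0 ?expf_neq0 // invr_eq0 pnatr_eq0.
apply: (mulfI hn).
have -> : qe C ^+ 2 * qa G ^+ 2 / 4 * (x + z - 2 * y) = qa G * qe C * (qb C * qe G - qe C * qb G) / 2.
  by rewrite -[LHS]addr0 -st0 /st; ring.
rewrite /kap; field.
by rewrite ?mulf_neq0 ?ha ?he.
Qed.

Lemma periodic_contra (x : nat -> R) (k : R) (n : nat) : (0 < n)%N ->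
  (forall i, x i.+2 - 2 * x i.+1 + x i = k) -> (forall i, x (i + n)%N = x i) ->
  x 1%N != x 0%N -> False.
Proof.
move=> hn hs hp h10.
have hd : forall i, x i.+1 - x i = (x 1%N - x 0%N) + i%:R * k.
  elim=> [|i IH]; first by rewrite mul0r addr0.
  have h := hs i; rewrite -[i.+1%:R]natr1.
  apply/eqP; rewrite -subr_eq0; apply/eqP.
  have -> : x i.+2 - x i.+1 - (x 1%N - x 0%N + (i%:R + 1) * k)
     = (x i.+2 - 2 * x i.+1 + x i - k) + ((x i.+1 - x i) - (x 1%N - x 0%N + i%:R * k)) by ring.
  by rewrite h IH !subrr addr0.
have hnR : (n%:R : R) != 0 by rewrite pnatr_eq0 -lt0n.
have hk : k = 0.
  have := hd n; have := hp 1%N; have := hp 0%N; rewrite add0n add1n => -> ->.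
  move=> h.
  have : n%:R * k = 0 by apply: (addrI (x 1%N - x 0%N)); rewrite addr0 -h.
  by move/eqP; rewrite mulf_eq0 (negbTE hnR) /= => /eqP.
have hx : forall i, x i = x 0%N + i%:R * (x 1%N - x 0%N).
  elim=> [|i IH]; first by rewrite mul0r addr0.
  have h := hd i; rewrite hk mulr0 addr0 in h; rewrite -[i.+1%:R]natr1.
  by rewrite -(subrK (x i) (x i.+1)) h IH; ring.
have := hp 0%N; rewrite add0n hx => /eqP; rewrite addrC -subr_eq0 addrK mulf_eq0 (negbTE hnR) /=.
by rewrite subr_eq0 (negbTE h10).
Qed.

Lemma core_nz G C A B : qd G = 0 -> qf G = 0 -> qa G != 0 -> qd C = 0 -> qf C = 0 ->
  qe C != 0 -> qeval G A = 0 -> qeval G B = 0 -> A <> B -> ldual C A B = 0 -> A.2 != 0.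
Proof.
move=> hdG hfG haG hdC hfC heC hA hB hAB hL.
apply/eqP => h0; have hA0 := onG_v0 hdG hfG haG hA h0.
move: hL; rewrite hA0 ldual_at0 // => hL.
have : B.2 ^+ 2 = 0.
  have hc : qe C ^+ 2 / 4 != 0 by rewrite mulf_neq0 ?expf_neq0 // invr_eq0 pnatr_eq0.
  apply: (mulfI hc); rewrite mulr0; apply/eqP; rewrite -oppr_eq0 -mulNr; apply/eqP; exact: hL.
move/eqP; rewrite expf_eq0 /= => /eqP hB2.
by apply: hAB; rewrite hA0 (onG_v0 hdG hfG haG hB hB2).
Qed.

Lemma tp_inv1 N P Z : nn N * (Z.1 - P.1) = (tp N P Z).1 * (tT N).1 + (tp N P Z).2 * N.1.
Proof. rewrite /tp /nn /dot /tT /=; ring. Qed.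
Lemma tp_inv2 N P Z : nn N * (Z.2 - P.2) = (tp N P Z).1 * (tT N).2 + (tp N P Z).2 * N.2.
Proof. rewrite /tp /nn /dot /tT /=; ring. Qed.

Lemma tp_inj N P Z1 Z2 : nn N != 0 -> tp N P Z1 = tp N P Z2 -> Z1 = Z2.
Proof.
move=> hN h.
have e1 := tp_inv1 N P Z1; have e2 := tp_inv1 N P Z2.
have f1 := tp_inv2 N P Z1; have f2 := tp_inv2 N P Z2.
rewrite h -e2 in e1; rewrite h -f2 in f1.
move: Z1 Z2 e1 f1 {e2 f2 h} => [a1 a2] [b1 b2] /= e1 f1.
congr pair.
  by apply: (addIr (- P.1)); apply: (mulfI hN).
by apply: (addIr (- P.2)); apply: (mulfI hN).
Qed.

Lemma N_nz G P : qdisc G != 0 -> qeval G P = 0 -> nn (qgrad G P) != 0.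
Proof.
move=> hd hP; apply/eqP => h0.
have h1 : (qgrad G P).1 = 0 by move: h0; rewrite /nn /dot; nra.
have h2 : (qgrad G P).2 = 0 by move: h0; rewrite /nn /dot; nra.
have m1 : mv1 G P = 0 by rewrite -[RHS](mul0r (2^-1)) -h1 /mv1 /qgrad /=; field.
have m2 : mv2 G P = 0 by rewrite -[RHS](mul0r (2^-1)) -h2 /mv2 /qgrad /=; field.
have m3 : mv3 G P = 0.
  have : mv3 G P = qeval G P - P.1 * mv1 G P - P.2 * mv2 G P by rewrite /mv1 /mv2 /mv3 /qeval; field.
  by rewrite hP m1 m2 !mulr0 !subr0.
by move: hd; rewrite -(adj3 G P) m1 m2 m3 !mulr0 !addr0 eqxx.
Qed.
End S.
Unset Implicit Arguments.
Theorem proposition2p13 (R : realType) (G C : quadric R) (P : point R) :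
  regular_conic G -> regular_conic C ->
  on_conic G P -> on_conic C P ->
  contact_poly G C P != 0%R ->
  (2 < int_mult G C P <= 4)%N ->
  ~ (exists A : nat -> point R,
        inscribed_circumscribed G C A /\ closed_polygon A).
Proof.
move=> [hdG _] [hdC _] hGP hCP hne /andP[h2 _] [A [[hon [htan hnc]] [n [hn hper]]]].
have hGP' : qeval G P = 0 := hGP.
have hCP' : qeval C P = 0 := hCP.
have hN := N_nz hdG hGP'.
set N := qgrad G P in hN.
set Gn := tq G N P; set Cn := tq C N P.
have hqdG : qd Gn = 0 by rewrite /Gn /tq /= /dot /tT /=; ring.
have hqfG : qf Gn = 0 by rewrite /Gn /tq /= hGP' mulr0.
have hqfC : qf Cn = 0 by rewrite /Cn /tq /= hCP' mulr0.
have heG : qe Gn != 0.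
  have -> : qe Gn = nn N ^+ 2 by rewrite /Gn /tq /= /nn expr2.
  by rewrite expf_neq0.
have hdiscG : qdisc Gn != 0 by rewrite tq_disc mulf_neq0 // expf_neq0.
have haG : qa Gn != 0.
  by apply/eqP => h; move: hdiscG; rewrite disc_norm // h !mul0r oppr0 eqxx.
have [hdCn hac] := contact_cond hCP' haG hne h2.
have hdiscC : qdisc Cn != 0 by rewrite tq_disc mulf_neq0 // expf_neq0.
have heC : qe Cn != 0.
  by apply/eqP => h; move: hdiscC; rewrite disc_norm // h expr0n /= !mulr0 !mul0r oppr0 eqxx.
pose W i := tp N P (A i).
have hW : forall i, qeval Gn (W i) = 0.
  by move=> i; rewrite tq_eval; have -> : qeval G (A i) = 0 := hon i; rewrite mulr0.
have hL : forall i, ldual Cn (W i) (W i.+1) = 0.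
  move=> i; case: (htan i) => _ [Z [hZ [hc hg]]].
  have hZ' : qeval C Z = 0 := hZ.
  have hc' : colv Z (A i) (A i.+1) = 0 := hc.
  rewrite /ldual; apply: (dual_tangent (Z := tp N P Z) hdiscC).
  - by rewrite tq_eval hZ' mulr0.
  - by rewrite tq_coll hc' mulr0.
  - by rewrite tq_grad hg mulr0.
have hneq : forall i, W i <> W i.+1.
  by move=> i h; case: (htan i) => hne' _; apply: hne'; exact: tp_inj hN h.
have hneq2 : forall i, W i.+2 <> W i.
  move=> i h; apply: (hnc i); rewrite (tp_inj hN h) /collinear; ring.
have hv : forall i, (W i).2 != 0.
  move=> i; exact: (core_nz hqdG hqfG haG hdCn hqfC heC (hW i) (hW i.+1) (hneq i) (hL i)).
pose X i := (W i).1 / (W i).2.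
have hF1 : forall i, Fv Gn Cn (X i) (X i.+1) = 0.
  move=> i; exact: (core_F hqdG hqfG heG (hW i) (hW i.+1) (hv i) (hv i.+1) (hneq i) (hL i)).
have hF2 : forall i, Fv Gn Cn (X i.+2) (X i.+1) = 0.
  move=> i; apply: (core_F hqdG hqfG heG (hW i.+2) (hW i.+1) (hv i.+2) (hv i.+1)).
    by move=> h; apply: (hneq i.+1); rewrite h.
  by rewrite ldual_sym; exact: hL.
have hX : forall i, X i != X i.+2.
  move=> i; apply/eqP => h; apply: (hneq2 i); symmetry.
  exact: (X_inj hqdG hqfG heG (hW i) (hW i.+2) (hv i) (hv i.+2) h).
have hs : forall i, X i.+2 - 2 * X i.+1 + X i = kap Gn Cn.
  move=> i; rewrite -(core_step hdCn hqfC haG heC hac (hF1 i) (hF2 i) (hX i)); ring.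
apply: (periodic_contra (x := X) hn hs).
  by move=> i; rewrite /X /W hper.
apply/eqP => h; apply: (hneq 0%N); symmetry.
exact: (X_inj hqdG hqfG heG (hW 1%N) (hW 0%N) (hv 1%N) (hv 0%N) h).
Qed.
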